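(* Let $P[1..m]$ and $S[1..m]$ be strings of the same length over a totally ordered alphabet. Then $$S[\mathcal{PP}_P(i)]\preceq S[i]\preceq S[\mathcal{PC}_P(i)]\ \text{ for all } 1\le i\le m$$ holds if and only if $$S[\mathcal{GP}_P(i)]\preceq S[i]\ \text{ for all } 1\le i\le m.$$
   Context: A string $S$ is a finite sequence $S[1],S[2],\dots$ over an alphabet $\Sigma$ with a total order $<$; $S[i..j]$ denotes the substring $S[i]\cdots S[j]$ (empty if $i>j$). For positions $i,j$ of $S$, write $S[i]\prec S[j]$ iff either $S[i]<S[j]$, or $S[i]$ and $S[j]$ have the same value and $i<j$; write $S[i]\preceq S[j]$ iff $S[i]\prec S[j]$ or $i=j$. Minimum elements are taken with respect to $\prec$ (leftmost among equal minimal values). Prefix-parent representation: $\mathcal{PP}_S(i)=\max\{j: 1\le j<i,\ S[j]\prec S[i]\}$ if such $j$ exists, and $\mathcal{PP}_S(i)=i$ otherwise. Prefix-child representation: $\mathcal{PC}_S(1)=1$, and for $i\ge 2$: if $\mathcal{PP}_S(i)=i$, then $\mathcal{PC}_S(i)$ is the index $j\in[1,i-1]$ such that $S[j]$ is the minimum of $S[1..i-1]$; if $\mathcal{PP}_S(i)=i-1$, then $\mathcal{PC}_S(i)=i$; if $\mathcal{PP}_S(i)<i-1$, then $\mathcal{PC}_S(i)$ is the index $j$ with $\mathcal{PP}_S(i)<j<i$ such that $S[j]$ is the minimum of $S[\mathcal{PP}_S(i)+1..i-1]$. Global-parent representation: $\mathcal{GP}_S(i)=j$ if there is an index $j>i$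 with $\mathcal{PC}_S(j)=i$ (there is at most one such $j$), and $\mathcal{GP}_S(i)=\mathcal{PP}_S(i)$ otherwise. *)

(* Defs.v *)
(* Strings are functions nat -> T read at 1-based positions 1..m. *)
From mathcomp Require Import all_boot all_order.
Set Implicit Arguments. Unset Strict Implicit. Unset Printing Implicit Defensive.

Section Defs.
Context {d : Order.disp_t} {T : orderType d}.

Definition prec (S : nat -> T) (i j : nat) : bool :=
  (S i < S j)%O || ((S i == S j) && (i < j)).
Definition preceq (S : nat -> T) (i j : nat) : bool := prec S i j || (i == j).

Fixpoint ppsearch (S : nat -> T) (i k : nat) : option nat :=
  match k with
  | 0 => None
  | k'.+1 => if prec S k i then Some k else ppsearch S i k'
  end.

Definition PP (S : nat -> T) (i : nat) : nat :=
  match ppsearch S i i.-1 with Some j => j | None => i end.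

(* index of the ≺-minimum of S[a..b] (assumes a <= b) *)
Definition argmin (S : nat -> T) (a b : nat) : nat :=
  foldl (fun best k => if prec S k best then k else best) a (iota a.+1 (b - a)).

Definition PC (S : nat -> T) (i : nat) : nat :=
  if i <= 1 then 1
  else if PP S i == i then argmin S 1 i.-1
  else if PP S i == i.-1 then i
  else argmin S (PP S i).+1 i.-1.

Definition GP (S : nat -> T) (m i : nat) : nat :=
  let s := iota i.+1 (m - i) in
  let k := find (fun j => PC S j == i) s in
  if k < size s then nth 0 s k else PP S i.

End Defs.

(* Main.v *)
Require Import Defs.
From mathcomp Require Import all_boot all_order.
From mathcomp Require Import zify.
Import Order.TTheory.
Set Implicit Arguments. Unset Strict Implicit.
Set Warnings "-notation-overridden".

Section Aux.
Context {d : Order.disp_t} {T : orderType d}.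
Implicit Types S : nat -> T.

Lemma prec_trans S a b c : prec S a b -> prec S b c -> prec S a c.
Proof.
rewrite /prec => /orP[h1|/andP[/eqP e1 h1]] /orP[h2|/andP[/eqP e2 h2]].
- by rewrite (lt_trans h1 h2).
- by rewrite -e2 h1.
- by rewrite e1 h2.
- by rewrite e1 e2 eqxx (ltn_trans h1 h2) orbT.
Qed.

Lemma prec_irr S a : prec S a a = false.
Proof. by rewrite /prec ltxx ltnn andbF. Qed.

Lemma prec_asym S a b : prec S a b -> prec S b a -> False.
Proof. by move=> h1 h2; have := prec_trans h1 h2; rewrite prec_irr. Qed.

Lemma prec_total S a b : a != b -> prec S a b || prec S b a.
Proof.
move=> nab; rewrite /prec; case: (ltgtP (S a) (S b)) => //= e.
case: (ltngtP a b) => // eab.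
by rewrite eab eqxx in nab.
Qed.

Lemma preceq_trans S a b c : preceq S a b -> preceq S b c -> preceq S a c.
Proof.
rewrite /preceq => /orP[h1|/eqP->] // /orP[h2|/eqP<-]; last by rewrite h1.
by rewrite (prec_trans h1 h2).
Qed.

Lemma prec_preceq S a b c : prec S a b -> preceq S b c -> prec S a c.
Proof. by move=> h /orP[h2|/eqP<-] //; exact: prec_trans h h2. Qed.

Lemma preceq_refl S a : preceq S a a.
Proof. by rewrite /preceq eqxx orbT. Qed.

Lemma preceq_neq S a b : a != b -> preceq S a b -> prec S a b.
Proof. by rewrite /preceq => /negbTE -> ; rewrite orbF. Qed.

Lemma ppsearch_some S i k j : ppsearch S i k = Some j ->
  [/\ 0 < j <= k, prec S j i & forall l, j < l <= k -> ~~ prec S l i].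
Proof.
elim: k => //= k IH; case: ifP => h.
  case=> <-; split=> // [|l /andP[a b]]; first by rewrite ltn0Sn leqnn.
  by have := leq_ltn_trans b a; rewrite ltnn.
move=> /IH [/andP[j0 jk] pj hl]; split=> //; first by rewrite j0 (leq_trans jk).
move=> l /andP[jl]; rewrite leq_eqVlt => /orP[/eqP->|lk]; first by rewrite h.
by apply: hl; rewrite jl.
Qed.

Lemma ppsearch_none S i k : ppsearch S i k = None ->
  forall l, 0 < l <= k -> ~~ prec S l i.
Proof.
elim: k => [_ l /andP[a b]|k IH /=]; first by have := leq_trans a b.
case: ifP => // h /IH hl l /andP[l0]; rewrite leq_eqVlt => /orP[/eqP->|lk].
  by rewrite h.
by apply: hl; rewrite l0.
Qed.

Lemma PP_spec S i :
  (PP S i = i /\ forall l, 0 < l < i -> ~~ prec S l i) \/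
  [/\ 0 < PP S i < i, prec S (PP S i) i &
      forall l, PP S i < l < i -> ~~ prec S l i].
Proof.
rewrite /PP; case E: (ppsearch S i i.-1) => [j|].
  case/ppsearch_some: E => /andP[j0 jk] pj hl; right; split=> //.
    by lia.
  move=> l /andP[jl li]; apply: hl; lia.
left; split=> // l /andP[l0 li]; apply: (ppsearch_none E); lia.
Qed.

Lemma foldl_argmin S lo n : forall st x, lo <= x <= st ->
  (forall l, lo <= l <= st -> preceq S x l) ->
  let r := foldl (fun best k => if prec S k best then k else best) x
                 (iota st.+1 n) in
  lo <= r <= st + n /\ forall l, lo <= l <= st + n -> preceq S r l.
Proof.
elim: n => [|n IH] st x hx hl /=; first by rewrite addn0.
rewrite -addSnnS; apply: IH.
- by case: ifP => _; move: hx; lia.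
- move=> l /andP[lol]; rewrite leq_eqVlt => /orP[/eqP->|]; case: ifP => h.
  + exact: preceq_refl.
  + have nx : x != st.+1.
      by apply/eqP => e; case/andP: hx => _; rewrite e ltnn.
    by have := prec_total S nx; rewrite h orbF => hp; rewrite /preceq hp.
  + rewrite ltnS => ls; apply/orP; left.
    by apply: prec_preceq h _; apply: hl; rewrite lol.
  + by rewrite ltnS => ls; apply: hl; rewrite lol.
Qed.

Lemma argmin_spec S a b : a <= b ->
  a <= argmin S a b <= b /\ forall l, a <= l <= b -> preceq S (argmin S a b) l.
Proof.
move=> ab; rewrite /argmin.
have := @foldl_argmin S a (b - a) a a; rewrite leqnn subnKC //; apply=> //.
by move=> l; rewrite -eqn_leq => /eqP->; exact: preceq_refl.
Qed.

Lemma PC_spec S i : 1 <= i -> PC S i = i \/ exists q,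
  [/\ q < PC S i < i,
      forall l, q < l < i -> preceq S (PC S i) l && prec S i l &
      (q = 0 /\ PP S i = i) \/ (q = PP S i /\ prec S q i /\ 0 < q)].
Proof.
move=> i1; rewrite /PC; case: ifP => i2.
  by left; apply/eqP; rewrite eqn_leq i2 i1.
have i2' : 1 < i by rewrite ltnNge i2.
have tot l : l < i -> ~~ prec S l i -> prec S i l.
  move=> li np; have nl : i != l by rewrite neq_ltn li orbT.
  by have := prec_total S nl; rewrite (negbTE np) orbF.
case: (PP_spec S i) => [[e hl]|[/andP[p0 pi] pp hl]].
  rewrite e eqxx; right; exists 0.
  have ab : 1 <= i.-1 by lia.
  case: (argmin_spec S ab) => /andP[a1 a2] ha; split.
  - by apply/andP; split; lia.
  - move=> l /andP[l0 li]; rewrite ha ?tot ?hl ?l0 //=; lia.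
  - by left.
have -> : (PP S i == i) = false by apply/eqP; lia.
case: ifP => [_|/negbT ne]; first by left.
right; exists (PP S i).
have ab : (PP S i).+1 <= i.-1.
  by move: ne pi; move/eqP; lia.
case: (argmin_spec S ab) => /andP[a1 a2] ha; split.
- by apply/andP; split; lia.
- move=> l /andP[l0 li]; rewrite ha ?tot ?hl ?l0 //=; lia.
- by right.
Qed.

Lemma PC_uniq S c j1 j2 : 1 <= j1 -> c < j1 -> j1 < j2 ->
  PC S j1 = c -> PC S j2 = c -> False.
Proof.
move=> j11 cj1 j12 e1 e2.
have j21 : 1 <= j2 by lia.
case: (PC_spec S j11) => [e|[q1 [/andP[q1c cj] h1 _]]]; first by lia.
case: (PC_spec S j21) => [e|[q2 [/andP[q2c _] h2 _]]]; first by lia.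
rewrite e1 in q1c cj h1; rewrite e2 in q2c h2.
have /andP[_ p1] := h1 c ltac:(lia).
have /andP[p2 _] := h2 j1 ltac:(lia).
have nc : c != j1 by apply/eqP; lia.
exact: (prec_asym p1 (preceq_neq nc p2)).
Qed.

Lemma PC_PP S i j : 1 <= i -> i < j -> PC S j = i -> PP S i != i ->
  PP S j = PP S i.
Proof.
move=> i1 ij e ne.
have j1 : 1 <= j by lia.
case: (PC_spec S j1) => [e'|[q [/andP[qc cj] h hq]]]; first by lia.
rewrite e in qc cj h.
case: (PP_spec S i) => [[e' _]|[/andP[p0 pi] pp hl]]; first by rewrite e' eqxx in ne.
have /andP[_ pji] := h i ltac:(lia).
case: (ltngtP q (PP S i)) => c.
- have /andP[h1 _] := h (PP S i) ltac:(lia).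
  have nn : i != PP S i by apply/eqP; lia.
  by case: (prec_asym pp (preceq_neq nn h1)).
- case: hq => [[q0 _]|[eq [pq q0]]]; first by lia.
  have := hl q ltac:(lia).
  by rewrite (prec_trans pq pji).
- case: hq => [[q0 _]|[eq _]]; first by lia.
  by rewrite -eq c.
Qed.

Lemma GP_spec S m c :
  (c < GP S m c <= m /\ PC S (GP S m c) = c) \/
  (GP S m c = PP S c /\ forall j, c < j <= m -> PC S j != c).
Proof.
rewrite /GP; set s := iota c.+1 (m - c); set a := fun j => PC S j == c.
case H: (has a s).
  left; rewrite -has_find H.
  have hm : nth 0 s (find a s) \in s by rewrite mem_nth // -has_find.
  split; last by apply/eqP; exact: (nth_find 0 H).
  move: hm; rewrite mem_iota; lia.
right; have -> : (find a s < size s) = false by rewrite -has_find H.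
split=> // j hj; apply/negP => hp.
have : has a s by apply/hasP; exists j; rewrite ?mem_iota //; lia.
by rewrite H.
Qed.

Lemma GP_child S m c j : 1 <= c -> c < j <= m -> PC S j = c -> GP S m c = j.
Proof.
move=> c1 hj e; case: (GP_spec S m c) => [[h1 h2]|[_ h]].
  case: (ltngtP (GP S m c) j) => // lt.
    by case: (PC_uniq (S := S) (c := c) (j1 := GP S m c) (j2 := j) ltac:(lia) ltac:(lia) lt h2 e).
  by case: (PC_uniq (S := S) (c := c) (j1 := j) (j2 := GP S m c) ltac:(lia) ltac:(lia) lt e h2).
by have := h j hj; rewrite e eqxx.
Qed.

End Aux.

Theorem mainTheorem3 (d : Order.disp_t) (T : orderType d) (m : nat)
    (P S : nat -> T) :
  (forall i, 1 <= i <= m -> preceq S (PP P i) i && preceq S i (PC P i)) <->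
  (forall i, 1 <= i <= m -> preceq S (GP P m i) i).
Proof.
split=> H i hi.
  case: (GP_spec P m i) => [[h1 h2]|[-> _]].
    by have /andP[_] := H (GP P m i) ltac:(lia); rewrite h2.
  by case/andP: (H i hi).
apply/andP; split.
  move: i hi; suff: forall k i, m - i < k -> 1 <= i <= m -> preceq S (PP P i) i.
    by move=> h i hi; apply: (h (m - i).+1).
  elim=> [|k IH] i hk hi; first by lia.
  case: (PP_spec P i) => [[-> _]|[/andP[p0 pi] _ _]]; first exact: preceq_refl.
  case: (GP_spec P m i) => [[h1 h2]|[e _]]; last by rewrite -e; apply: H.
  have ne : PP P i != i by apply/eqP; lia.
  have ej := PC_PP (S := P) (i := i) (j := GP P m i) ltac:(lia) ltac:(lia) h2 ne.
  have := IH (GP P m i) ltac:(lia) ltac:(lia); rewrite ej => h.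
  exact: preceq_trans h (H i hi).
case: (PC_spec P (i := i) ltac:(lia)) => [->|[q [/andP[qc ci] _ _]]].
  exact: preceq_refl.
have := H (PC P i) ltac:(lia).
by rewrite (GP_child (S := P) (m := m) (c := PC P i) (j := i) ltac:(lia) ltac:(lia) erefl).
Qed.
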